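(* Consider the factor (Tanner) graph of an LDPC code decoded by the binary message-passing decoder described in the context. Let $C$ be a cycle in the factor graph all of whose variable nodes have degree two or three. Assume that the channel messages associated with the variable nodes of $C$ are in error, and that all other incoming messages at the check nodes of $C$ (i.e. those not arriving along edges of $C$) are correct. Then the variable nodes forming the cycle cannot be corrected by the binary message-passing decoder: in every iteration the messages they send along the edges of $C$ remain in error.
   Context: Transmitted bits are represented in $\{+1,-1\}$ and a message is ''in error'' if its sign differs from the transmitted bit of the corresponding variable node. All messages between variable and check nodes are binary ($\pm1$). In the first iteration each variable node sends its channel hard decision. A check node sends on each edge the product of the messages received on its other edges. A variable node of degree $d_v$ with channel L-value $L_{ch}=y D_{ch}$ ($y\in\{\pm1\}$ the channel hard decision, $D_{ch}>0$ its reliability) and incoming check messages $a_i\in\{\pm1\}$, all converted to L-values $a_iD_{av}$ with a common reliability $D_{av}>0$ in a given iteration, sends on edge $j$ the sign of $L_{ev,j}=L_{ch}+\sum_{i\ne j}a_iD_{av}$. *)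

(* Defs.v *)
From HB Require Import structures.
From mathcomp Require Import all_boot all_order all_algebra.
Set Implicit Arguments. Unset Strict Implicit. Unset Printing Implicit Defensive.
Import Order.TTheory GRing.Theory Num.Theory.
Local Open Scope ring_scope.

(* Bits / binary messages are elements of R taking values +1 or -1. *)
Definition pm1 {R : realFieldType} (a : R) : Prop := a = 1 \/ a = -1.

(* Hard decision (sign) of an L-value; tie convention: sign 0 = +1. *)
Definition hard {R : realFieldType} (L : R) : R := if L < 0 then -1 else 1.

Section Decoder.
Variables (R : realFieldType) (V C : finType) (adj : V -> C -> bool).

Definition vdeg (v : V) : nat := #|[set c | adj v c]|.

(* x is a codeword: every parity check is satisfied (product of +-1 bits is 1) *)
Definition is_codeword (x : V -> R) : Prop :=
  forall c : C, \prod_(v | adj v c) x v = 1.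

Definition check_out (mvc : V -> C -> R) (c : C) (v : V) : R :=
  \prod_(v' | adj v' c && (v' != v)) mvc v' c.

(* variable-to-check messages in iteration t (t = 0 is the first iteration):
   y = channel hard decisions, Dch = channel reliability,
   Dav t = common reliability of check messages used in iteration t.+1 *)
Fixpoint msg_vc (y : V -> R) (Dch : R) (Dav : nat -> R) (t : nat) : V -> C -> R :=
  match t with
  | 0 => fun v _ => y v
  | t'.+1 => fun v c =>
      hard (Dch * y v +
            \sum_(c' | adj v c' && (c' != c))
               check_out (msg_vc y Dch Dav t') c' v * Dav t')
  end.

End Decoder.

(* Main.v *)
Require Import Defs.
From HB Require Import structures.
From mathcomp Require Import all_boot all_order all_algebra.
From mathcomp Require Import zify ring lra.
Import Order.TTheory GRing.Theory Num.Theory.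
Local Open Scope ring_scope.

Section H.
Variables (R : realFieldType) (V C : finType) (adj : V -> C -> bool).

Lemma pm1M (a b : R) : pm1 a -> pm1 b -> pm1 (a * b).
Proof. by case=> ->; case=> ->; rewrite /pm1; [left|right|right|left]; ring. Qed.

Lemma pm1_hard (a : R) : pm1 (hard a).
Proof. by rewrite /hard /pm1; case: ifP; [right|left]. Qed.

Lemma msg_pm1 (y : V -> R) Dch Dav t v c :
  (forall v, pm1 (y v)) -> pm1 (msg_vc adj y Dch Dav t v c).
Proof. by move=> Hy; case: t => [|t] /=; [apply: Hy | apply: pm1_hard]. Qed.

Lemma co_pm1 (m : V -> C -> R) c v : (forall v c, pm1 (m v c)) -> pm1 (check_out adj m c v).
Proof.
move=> Hm; rewrite /check_out; apply: (big_ind (fun a => pm1 a)) => //.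
- by left.
- exact: pm1M.
Qed.

Lemma co_err (x : V -> R) (m : V -> C -> R) c w u :
  (forall v, pm1 (x v)) -> is_codeword adj x ->
  adj w c -> adj u c -> u != w -> m u c = - x u ->
  (forall v, adj v c -> v != w -> v != u -> m v c = x v) ->
  check_out adj m c w = - x w.
Proof.
move=> Hx Hcw Hw Hu Huw Hmu Hoth.
have H1 := Hcw c.
rewrite (bigD1 w) //= (bigD1 u) /= in H1; last by rewrite Hu Huw.
rewrite /check_out (bigD1 u) /=; last by rewrite Hu Huw.
set Q := \prod_(i | _) x i in H1.
have -> : \prod_(i | (adj i c && (i != w)) && (i != u)) m i c = Q.
  by apply: eq_bigr => i /andP [/andP [H2 H3] H4]; apply: Hoth.
rewrite Hmu.
by case: (Hx w) H1 => ->; case: (Hx u) => ->; move=> H1; lra.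
Qed.

Lemma sum_small (I : finType) (B : {set I}) (F : I -> R) d :
  (#|B| <= 1)%N -> (forall i, `|F i| <= d) -> 0 <= d -> `|\sum_(i in B) F i| <= d.
Proof.
move=> HB HF Hd.
have [/eqP|] := posnP #|B|.
  by rewrite cards_eq0 => /eqP ->; rewrite big_set0 normr0.
move=> H; have /cards1P [a ->] : #|B| == 1%N by rewrite eqn_leq HB H.
by rewrite big_set1.
Qed.

Lemma vn_err (x y : V -> R) Dch Dav t v c c0 :
  (forall v, pm1 (y v)) -> pm1 (x v) -> 0 < Dch -> 0 < Dav t ->
  adj v c -> adj v c0 -> c0 != c -> (vdeg adj v <= 3)%N ->
  y v = - x v -> check_out adj (msg_vc adj y Dch Dav t) c0 v = - x v ->
  msg_vc adj y Dch Dav t.+1 v c = - x v.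
Proof.
move=> Hy Hxv HD HDa Hc Hc0 Hne Hdeg Hyv Hco /=.
rewrite (bigD1 c0) /=; last by rewrite Hc0 Hne.
set r := \sum_(i | _) _.
have Hr : `|r| <= Dav t.
  rewrite /r.
  pose B := [set c' | (adj v c' && (c' != c)) && (c' != c0)].
  rewrite (eq_bigl (fun c' => c' \in B)); last by move=> z; rewrite inE.
  apply: sum_small; last by apply: ltW.
  - pose A := [set c' | adj v c'].
    have EA : #|A| = vdeg adj v by [].
    have E1 := cardsD1 c A.
    have E2 := cardsD1 c0 (A :\ c).
    have EB : B = A :\ c :\ c0.
      by apply/setP => z; rewrite !inE; case: (adj v z); case: (z != c); case: (z != c0).
    rewrite EB.
    rewrite E1 in EA. rewrite E2 in EA.
    have HA : c \in A by rewrite inE.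
    have HA0 : c0 \in A :\ c by rewrite !inE Hne Hc0.
    rewrite HA HA0 in EA; lia.
  - move=> i; rewrite normrM (gtr0_norm HDa).
    have := @co_pm1 (msg_vc adj y Dch Dav t) i v ltac:(by move=> ??; apply: msg_pm1).
    by case=> ->; rewrite ?normrN normr1 mul1r.
rewrite Hco Hyv /hard.
move: Hr; rewrite ler_norml => /andP [Hr1 Hr2].
by case: Hxv => ->; case: ifP => H; try lra; move: H; move/negbT; rewrite -leNgt => H; lra.
Qed.

End H.

Theorem theorem3 (R : realFieldType) (V C : finType) (adj : V -> C -> bool)
  (x y : V -> R) (Dch : R) (Dav : nat -> R)
  (k : nat) (vs : 'I_k -> V) (cs : 'I_k -> C) :
  (* transmitted codeword and channel hard decisions, all in {+1,-1} *)
  (forall v, pm1 (x v)) -> (forall v, pm1 (y v)) -> is_codeword adj x ->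
  (* reliabilities *)
  0 < Dch -> (forall t, 0 < Dav t) ->
  (* the cycle v_0 c_0 v_1 c_1 ... v_{k-1} c_{k-1} v_0 *)
  (2 <= k)%N -> injective vs -> injective cs ->
  (forall i, adj (vs i) (cs i) /\ adj (vs (ordS i)) (cs i)) ->
  (* variable nodes of the cycle have degree 2 or 3 *)
  (forall i, vdeg adj (vs i) = 2%N \/ vdeg adj (vs i) = 3%N) ->
  (* channel messages of the cycle's variable nodes are in error *)
  (forall i, y (vs i) = - x (vs i)) ->
  (* all incoming messages at the cycle's check nodes along non-cycle edges are correct *)
  (forall t i v, adj v (cs i) -> v != vs i -> v != vs (ordS i) ->
     msg_vc adj y Dch Dav t v (cs i) = x v) ->
  (* conclusion: in every iteration the messages sent along the cycle edges are in error *)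
  forall t i,
    msg_vc adj y Dch Dav t (vs i) (cs i) = - x (vs i) /\
    msg_vc adj y Dch Dav t (vs (ordS i)) (cs i) = - x (vs (ordS i)).
Proof.
move=> Hx Hy Hcw HD HDa Hk Hvs Hcs Hadj Hdeg Hyx Hcorr t.
have Hne : forall i : 'I_k, ordS i != i.
  move=> i; apply/eqP => /(congr1 val) /=; have := ltn_ord i.
  case: (ltngtP i.+1 k) => Hi.
  - by rewrite modn_small //; lia.
  - lia.
  - by rewrite Hi modnn; lia.
have Hdeg3 : forall i, (vdeg adj (vs i) <= 3)%N by move=> i; case: (Hdeg i) => ->.
elim: t => [|t IH] i.
  by rewrite /= !Hyx.
split.
- have [p Hpi] : exists p, ordS p = i by exists (ord_pred i); rewrite ord_predK.
  subst i.
  apply: (@vn_err R V C adj x y Dch Dav t _ _ (cs p)) => //.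
  + exact: (Hadj (ordS p)).1.
  + by exact: (Hadj p).2.
  + by rewrite (inj_eq Hcs) eq_sym Hne.
  + apply: (@co_err R V C adj x _ _ _ (vs p)) => //.
    * by exact: (Hadj p).2.
    * exact: (Hadj p).1.
    * by rewrite (inj_eq Hvs) eq_sym Hne.
    * exact: (IH p).1.
    * move=> v Hv Hv1 Hv2; apply: Hcorr => //; by [].
- apply: (@vn_err R V C adj x y Dch Dav t _ _ (cs (ordS i))) => //.
  + exact: (Hadj i).2.
  + exact: (Hadj (ordS i)).1.
  + by rewrite (inj_eq Hcs) Hne.
  + apply: (@co_err R V C adj x _ _ _ (vs (ordS (ordS i)))) => //.
    * exact: (Hadj (ordS i)).1.
    * exact: (Hadj (ordS i)).2.
    * by rewrite (inj_eq Hvs) Hne.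
    * exact: (IH (ordS i)).2.
    * move=> v Hv Hv1 Hv2; exact: Hcorr.
Qed.
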